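(* Let $C$ be an $A$-code of length $l$ having a basis of divisors consisting of one element. Then $C$ is isodual if and only if $l\le 2$ and either $C$ is self-dual ($C=C^\perp$) or $C=C^{\perp R}$.
   Context: Let $\mathbb{F}$ be a finite field, $f(x)\in\mathbb{F}[x]$ monic of degree $m$, $A=\mathbb{F}[x]/\langle f(x)\rangle$. An $A$-code of length $l$ is an $A$-submodule of $A^l$; $C^\perp=\{a\in A^l:\sum_ia_ic_i=0\ \forall c\in C\}$ and $C^{\perp R}=\{(c_l,\ldots,c_1):(c_1,\ldots,c_l)\in C^\perp\}$. $C$ is isodual if $C^\perp$ is the image of $C$ under some permutation of coordinates. For $u\in A^l$, $L_{\mathrm{ind}}(u)$ is the smallest index of a nonzero entry and $L_{\mathrm{coef}}(u)$ that entry. For nonzero $C$, $L_{\mathrm{ind}}(C)=\min_{u\in C}L_{\mathrm{ind}}(u)$; $L_{\mathrm{coef}}(C)$ is the monic polynomial $g$ of minimum degree such that some $c\in C$ has $L_{\mathrm{ind}}(c)=L_{\mathrm{ind}}(C)$ and $L_{\mathrm{coef}}(c)=g$ (such $c$ is a leading element). $C^{(1)}=C$, $C^{(n+1)}=\{c\in C^{(n)}:L_{\mathrm{ind}}(c)>L_{\mathrm{ind}}(C^{(n)})\}$ while $C^{(n)}\ne0$; with $k$ largest such that $C^{(k)}\ne0$, a tuple $(g^{(1)},\dots,g^{(k)})$ with $g^{(j)}$ a leading element of $C^{(j)}$ is a basis of divisors. *)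

(* Defs.v *)
From HB Require Import structures.
From mathcomp Require Import all_boot all_order all_algebra all_fingroup.
Set Implicit Arguments. Unset Strict Implicit. Unset Printing Implicit Defensive.
Import GRing.Theory.
Local Open Scope ring_scope.

(* A = F[x]/<f> is modelled by mathcomp's {poly %/ f} (qpoly.v), which is the
   quotient ring F[x]/<f> whenever f is monic with size f > 1 (deg f >= 1).
   Words of A^l are row vectors 'rV[A]_l; coordinates are 0-based. *)

Section Codes.
Variables (F : finFieldType) (f : {poly F}) (l : nat).
Local Notation A := {poly %/ f}.
Local Notation word := 'rV[A]_l.

Definition is_Acode (C : {set word}) : Prop :=
  [/\ (0 : word) \in C,
      (forall u v, u \in C -> v \in C -> u + v \in C) &
      (forall (a : A) u, u \in C -> a *: u \in C)].

(* L_ind(u): smallest (0-based) index of a nonzero entry; l if u = 0 *)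
Definition Lind (u : word) : nat :=
  \big[minn/l]_(i < l | u ord0 i != 0) (i : nat).

Definition LindC (C : {set word}) : nat := \big[minn/l]_(c in C) Lind c.

(* C^(n+1) = { c in C^(n) : L_ind(c) > L_ind(C^(n)) }  (0 has L_ind = l, so
   it stays in while C^(n) is nonzero) *)
Definition Cnext (C : {set word}) : {set word} :=
  [set c in C | LindC C < Lind c]%N.

(* Cseq C n = C^(n), for n >= 1 *)
Definition Cseq (C : {set word}) (n : nat) : {set word} := iter n.-1 Cnext C.

Definition has_one_element_basis (C : {set word}) : Prop :=
  Cseq C 1 != [set 0] /\ Cseq C 2 = [set 0].

Definition dual (C : {set word}) : {set word} :=
  [set a : word | [forall c in C, \sum_(i < l) a ord0 i * c ord0 i == 0]].

Definition rev_word (u : word) : word := \row_(i < l) u ord0 (rev_ord i).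

Definition dualR (C : {set word}) : {set word} := [set rev_word a | a in dual C].

Definition perm_word (s : 'S_l) (u : word) : word := \row_(i < l) u ord0 (s i).

Definition isodual (C : {set word}) : Prop :=
  exists s : 'S_l, dual C = [set perm_word s c | c in C].

End Codes.

(* Main.v *)
Require Import Defs.
From HB Require Import structures.
From mathcomp Require Import all_boot all_order all_algebra all_fingroup.
Set Implicit Arguments. Unset Strict Implicit. Unset Printing Implicit Defensive.
Import GRing.Theory.
Local Open Scope ring_scope.


Lemma bigmin_le (I : finType) (P : pred I) (F : I -> nat) (m : nat) (j : I) :
  P j -> (\big[minn/m]_(i | P i) F i <= F j)%N.
Proof.
move=> Pj; have : j \in index_enum I by rewrite mem_index_enum.
elim: (index_enum I) => [//|a r IH]; rewrite big_cons inE => /predU1P [<-|jr].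
  by rewrite Pj geq_minl.
by case: (P a); [rewrite geq_min IH ?orbT|exact: IH].
Qed.

Lemma bigmin_attain (I : finType) (P : pred I) (F : I -> nat) (m : nat) :
  let b := \big[minn/m]_(i | P i) F i in
  b = m \/ exists2 j, P j & b = F j.
Proof.
apply: (big_ind (fun x => x = m \/ exists2 j, P j & x = F j)); first by left.
- by move=> x y Hx Hy; case: (leqP x y).
- by move=> i Pi; right; exists i.
Qed.

Lemma Lind_lt (F : finFieldType) (f : {poly F}) (l : nat) (u : 'rV[{poly %/ f}]_l) (j : 'I_l) :
  u ord0 j != 0 -> (Lind u <= j)%N.
Proof. by move=> H; rewrite /Lind; apply: (@bigmin_le _ (fun i => u ord0 i != 0)). Qed.

Lemma Lind_nz (F : finFieldType) (f : {poly F}) (l : nat) (u : 'rV[{poly %/ f}]_l) (j : 'I_l) :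
  Lind u = j -> u ord0 j != 0.
Proof.
rewrite /Lind; case: (bigmin_attain (fun i => u ord0 i != 0) (fun i : 'I_l => (i : nat)) l) => [->|[i Hi ->]] E.
  by move: (ltn_ord j); rewrite -E ltnn.
by have -> : j = i by apply: val_inj.
Qed.

Lemma key_index (F : finFieldType) (f : {poly F}) (l : nat) (C : {set 'rV[{poly %/ f}]_l}) :
  is_Acode C -> has_one_element_basis C ->
  exists k : 'I_l, forall c, c \in C -> c ord0 k = 0 -> c = 0.
Proof.
move=> [C0 CD CZ] [H1 H2].
have [c0 c0C c0nz] : exists2 c0, c0 \in C & c0 != 0.
  apply/exists_inP; apply: contraNT H1 => /exists_inPn H.
  apply/eqP/setP => x; rewrite /Cseq /= in_set1.
  by apply/idP/eqP => [xC|->//]; apply/eqP/negbNE/H.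
have [j0 Hj0] : exists j0 : 'I_l, c0 ord0 j0 != 0.
  apply/existsP; apply: contraNT c0nz => /existsPn H.
  by apply/eqP/rowP => j; rewrite mxE; apply/eqP/negbNE/H.
have Hlt : (Lind c0 < l)%N by apply: leq_ltn_trans (Lind_lt Hj0) _.
exists (Ordinal Hlt) => c cC ck0.
have Leq : forall d, d \in C -> d != 0 -> Lind d = LindC C.
  move=> d dC dnz; apply/eqP; rewrite eqn_leq.
  rewrite /LindC (bigmin_le _ _ dC) andbT.
  have : d \notin Cnext C.
    by move: H2; rewrite /Cseq /= => ->; rewrite in_set1.
  by rewrite inE dC /= -leqNgt.
apply/eqP; apply: contraT => cnz.
have := @Lind_nz _ _ _ c (Ordinal Hlt).
by rewrite /= (Leq c cC cnz) -(Leq c0 c0C c0nz) ck0 eqxx => /(_ erefl).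
Qed.

Section S2.
Import Pdiv.CommonRing Pdiv.RingMonic Pdiv.Field.


Lemma cyclic_code (F : finFieldType) (f : {poly F}) (l : nat) (C : {set 'rV[{poly %/ f}]_l}) (k : 'I_l) :
  is_Acode C -> (forall c, c \in C -> c ord0 k = 0 -> c = 0) ->
  exists v, forall c, c \in C -> exists a : {poly %/ f}, c = a *: v.
Proof.
move=> [C0 CD CZ] Hk.
have [c0 /andP [c0C c0nz]|] := pickP (fun x => (x \in C) && (x != 0)); last first.
  move=> H; exists 0 => c cC; exists 0; rewrite scale0r.
  by have := H c; rewrite cC /= => /negbFE/eqP.
set P := (fun x => (x \in C) && (x != 0)).
have P0 : P c0 by rewrite /P c0C.
case: (arg_minnP (fun x : 'rV[{poly %/ f}]_l => size (x ord0 k : {poly F})) P0) => v /andP [vC vnz] vmin.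
exists v => c cC.
pose g := (v ord0 k : {poly F}).
have gnz : g != 0.
  apply: contra vnz => /eqP g0; apply/eqP/Hk => //; apply: val_inj; exact: g0.
pose p := (c ord0 k : {poly F}).
pose a := in_qpoly f (p %/ g).
exists a.
pose d := c + (- a) *: v.
have dC : d \in C by apply: CD => //; apply: CZ.
have Mm := monic_mk_monic f.
have dk : (d ord0 k : {poly F}) = p %% g.
  rewrite /d !mxE mulNr raddfB /=.
  rewrite (rmodp_mulml Mm (p %/ g) g).
  change (p - rmodp (p %/ g * g) (mk_monic f) = p %% g).
  have -> : p %/ g * g = p - p %% g by rewrite {2}(divp_eq p g) addrK.
  have sm : (size (p - p %% g)%R < size (mk_monic f))%N.
    apply: leq_ltn_trans (size_polyD _ _) _; rewrite size_polyN gtn_max.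
    rewrite size_mk_monic /=.
    apply: ltn_trans (size_mk_monic (v ord0 k)); by rewrite ltn_modp gnz.
  by rewrite (rmodp_small sm) opprB addrCA subrr addr0.
have : d = 0.
  apply/eqP; apply: contraT => dnz.
  have := vmin d; rewrite /P dC dnz dk => /(_ isT).
  by rewrite leqNgt ltn_modp gnz.
by move/eqP; rewrite /d scaleNr addr_eq0 opprK => /eqP.
Qed.

End S2.


Lemma rev_wordK (F : finFieldType) (f : {poly F}) (l : nat) :
  involutive (@rev_word F f l).
Proof. by move=> u; apply/rowP => i; rewrite !mxE rev_ordK. Qed.

Lemma perm_small (l : nat) (s : 'S_l) : (l <= 2)%N ->
  (forall i, s i = i) \/ (forall i, s i = rev_ord i).
Proof.
case: l s => [|[|[|l]]] s // _.
- by left => [[]].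
- by left => i; apply/val_inj; rewrite /= !ord1.
- have H : forall j : 'I_2, j = ord0 \/ j = ord_max.
    by case=> [[|[|//]]] Hj; [left|right]; apply/val_inj.
  have Hs : s ord0 != s ord_max by rewrite (inj_eq perm_inj).
  case: (H (s ord0)) => E0.
  + left => i; case: (H i) => ->; first by [].
    case: (H (s ord_max)) => // E1; move: Hs; by rewrite E0 E1.
  + right => i; case: (H i) => ->; first by rewrite E0; apply/val_inj.
    case: (H (s ord_max)) => E1; last by move: Hs; rewrite E0 E1.
    by rewrite E1; apply/val_inj.
Qed.

Lemma card_bound (F : finFieldType) (f : {poly F}) (l : nat) (v : 'rV[{poly %/ f}]_l) :
  (#|{: 'rV[{poly %/ f}]_l}| <=
    #|{: {poly %/ f}}| * #|[set w : 'rV[{poly %/ f}]_l | (\sum_i w ord0 i * v ord0 i == 0)%R]|)%N.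
Proof.
set K := [set w : 'rV[{poly %/ f}]_l | _].
pose phi (w : 'rV[{poly %/ f}]_l) := \sum_i w ord0 i * v ord0 i.
pose rep (y : {poly %/ f}) := odflt 0 [pick z | phi z == y].
have repP : forall x, phi (rep (phi x)) = phi x.
  move=> x; rewrite /rep; case: pickP => [z /eqP //|/(_ x)]; by rewrite eqxx.
have phiB : forall x y, phi (x - y) = phi x - phi y.
  by move=> x y; rewrite /phi -sumrB; apply: eq_bigr => i _; rewrite !mxE mulrBl.
pose h x := (phi x, x - rep (phi x)).
have hinj : injective h.
  move=> x y [E1 E2]; move: E2; rewrite E1 => /eqP; rewrite -subr_eq0.
  by rewrite opprB addrA subrK subr_eq0 => /eqP.
rewrite -[#|{: {poly %/ f}}|]cardsT -cardsX -(card_imset _ hinj); apply: subset_leq_card.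
apply/subsetP => z /imsetP [x _ ->]; rewrite !inE /=.
by rewrite -/(phi _) phiB repP subrr.
Qed.

Theorem mainTheorem5 (F : finFieldType) (f : {poly F}) (l : nat)
    (C : {set 'rV[{poly %/ f}]_l}) :
  f \is monic -> (1 < size f)%N ->
  is_Acode C -> has_one_element_basis C ->
  (isodual C <-> (l <= 2)%N /\ (C = dual C \/ C = dualR C)).
Proof.
move=> _ _ HA H1.
split.
- move=> [s Hs].
  have [k Hk] := key_index HA H1.
  have [v Hv] := cyclic_code HA Hk.
  have [C0 CD CZ] := HA.
  set K := [set w : 'rV[{poly %/ f}]_l | \sum_i w ord0 i * v ord0 i == 0].
  have KD : K \subset dual C.
    apply/subsetP => w; rewrite !inE => /eqP Kw; apply/forall_inP => c cC.
    have [a ->] := Hv c cC.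
    rewrite (eq_bigr (fun i => a * (w ord0 i * v ord0 i))) => [|i _].
      by rewrite -mulr_sumr Kw mulr0.
    by rewrite mxE mulrCA.
  have CA : (#|C| <= #|{: {poly %/ f}}|)%N.
    have inj : {in C &, injective (fun c : 'rV[{poly %/ f}]_l => c ord0 k)}.
      move=> c d cC dC E; apply/eqP; rewrite -subr_eq0; apply/eqP/Hk.
        by rewrite -scaleN1r; apply: CD => //; apply: CZ.
      by rewrite !mxE E subrr.
    by rewrite -(card_in_imset inj) max_card.
  have KC : (#|K| <= #|C|)%N.
    apply: leq_trans (subset_leq_card KD) _.
    by rewrite Hs leq_imset_card.
  have A2 : (1 < #|{: {poly %/ f}}|)%N.
    have := max_card (mem [set (0 : {poly %/ f}); (1 : {poly %/ f})]).
    by rewrite cards2 eq_sym oner_eq0.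
  have bound := card_bound v; rewrite -/K card_mx mul1n in bound.
  have lle : (l <= 2)%N.
    rewrite -(leq_exp2l _ _ A2); apply: leq_trans bound _.
    by rewrite expnS expn1 leq_mul2l (leq_trans KC CA) orbT.
  split => //.
  case: (perm_small s lle) => Es.
  + left; rewrite Hs (eq_imset _ (_ : perm_word s =1 id)) ?imset_id //.
    by move=> c; apply/rowP => i; rewrite mxE Es.
  + right; rewrite /dualR Hs (eq_imset _ (_ : perm_word s =1 @rev_word _ _ _)).
      by rewrite -imset_comp (eq_imset _ (rev_wordK (l:=l))) imset_id.
    by move=> c; apply/rowP => i; rewrite !mxE Es.
- move=> [_ [E|E]].
  + by exists 1%g; rewrite -E (eq_imset _ (_ : perm_word 1 =1 id)) ?imset_id //
       => c; apply/rowP => i; rewrite mxE perm1.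
  + exists (perm (@rev_ord_inj l)).
    rewrite (eq_imset _ (_ : perm_word _ =1 @rev_word _ _ _)).
      by rewrite {2}E /dualR -imset_comp (eq_imset _ (rev_wordK (l:=l))) imset_id.
    by move=> c; apply/rowP => i; rewrite !mxE permE.
Qed.
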